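(* There exist unital endomorphisms of $C^1[0,1]$ which are Riesz operators but are not power compact. For example, the endomorphism $f\mapsto f\circ\phi$ with $\phi(x)=x^2/2$ is such an endomorphism.
   Context: $C^1[0,1]$ is the Banach algebra of continuously differentiable functions on $[0,1]$ with norm $\|f\|_\infty+\|f'\|_\infty$. A bounded operator $T$ is a Riesz operator if $\lim_{n}\left[\inf\{\|T^n-K\|:K \text{ compact}\}\right]^{1/n}=0$; it is power compact if $T^N$ is compact for some positive integer $N$. *)

(* Defs.v *)
From Stdlib Require Import Reals.
Open Scope R_scope.

(* Elements of C^1[0,1] are represented by functions R -> R; only their
   values on [0,1] matter. *)
Definition I01 (x : R) : Prop := 0 <= x <= 1.

Definition eq01 (f g : R -> R) : Prop := forall x, I01 x -> f x = g x.

Definition is_deriv01 (f f' : R -> R) : Prop :=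
  forall x, I01 x -> forall eps, 0 < eps -> exists delta, 0 < delta /\
    forall y, I01 y -> Rabs (y - x) < delta ->
      Rabs (f y - f x - f' x * (y - x)) <= eps * Rabs (y - x).

Definition cont01 (g : R -> R) : Prop :=
  forall x, I01 x -> forall eps, 0 < eps -> exists delta, 0 < delta /\
    forall y, I01 y -> Rabs (y - x) < delta -> Rabs (g y - g x) < eps.

Definition C1 (f : R -> R) : Prop := exists f', is_deriv01 f f' /\ cont01 f'.

(* ||f||_inf + ||f'||_inf <= c  (the derivative on [0,1] is unique) *)
Definition C1norm_le (f : R -> R) (c : R) : Prop :=
  exists f', is_deriv01 f f' /\
    forall x y, I01 x -> I01 y -> Rabs (f x) + Rabs (f' y) <= c.

(* (Linear) operators on C^1[0,1], represented as maps on representatives. *)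
Definition Op := (R -> R) -> (R -> R).

Definition is_op (A : Op) : Prop :=
  (forall f, C1 f -> C1 (A f)) /\
  (forall f g, C1 f -> C1 g -> eq01 f g -> eq01 (A f) (A g)) /\
  (forall f g a, C1 f -> C1 g ->
     eq01 (A (fun x => a * f x + g x)) (fun x => a * A f x + A g x)).

Definition op_norm_le (A : Op) (c : R) : Prop :=
  0 <= c /\ forall f r, C1 f -> C1norm_le f r -> C1norm_le (A f) (c * r).

Definition bounded_op (A : Op) : Prop := is_op A /\ exists c, op_norm_le A c.

Definition op_pow (A : Op) (n : nat) : Op := fun f => Nat.iter n A f.

Definition op_sub (A B : Op) : Op := fun f x => A f x - B f x.

(* compact operator: the image of the closed unit ball is relatively compact,
   i.e. every image of a sequence in the unit ball has a subsequence converging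
   in C^1[0,1]. *)
Definition compact_op (A : Op) : Prop :=
  bounded_op A /\
  forall u : nat -> R -> R, (forall n, C1 (u n) /\ C1norm_le (u n) 1) ->
    exists (phi : nat -> nat) (g : R -> R),
      (forall n, (phi n < phi (S n))%nat) /\ C1 g /\
      forall eps, 0 < eps -> exists N, forall n, (N <= n)%nat ->
        C1norm_le (fun x => A (u (phi n)) x - g x) eps.

(* Riesz operator: lim_n (inf_{K compact} ||T^n - K||)^(1/n) = 0, unfolded:
   for every eps > 0, for all large n, inf_K ||T^n - K|| < eps^n. *)
Definition riesz_op (T : Op) : Prop :=
  bounded_op T /\
  forall eps, 0 < eps -> exists N, forall n, (N <= n)%nat ->
    exists K c, compact_op K /\ c < eps ^ n /\ op_norm_le (op_sub (op_pow T n) K) c.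

Definition power_compact (T : Op) : Prop :=
  exists N, (1 <= N)%nat /\ compact_op (op_pow T N).

Definition unital_endo (T : Op) : Prop :=
  bounded_op T /\
  (forall f g, C1 f -> C1 g ->
     eq01 (T (fun x => f x * g x)) (fun x => T f x * T g x)) /\
  eq01 (T (fun _ => 1)) (fun _ => 1).

Definition comp_op (phi : R -> R) : Op := fun f x => f (phi x).

(* Main.v *)
Require Import Defs.
From Stdlib Require Import Reals Lra Lia ClassicalEpsilon.
From Coquelicot Require Import Coquelicot.
Require Import Defs.
Open Scope R_scope.

Lemma deriv_unique f f1 f2 : is_deriv01 f f1 -> is_deriv01 f f2 ->
  forall x, I01 x -> f1 x = f2 x.
Proof.
  intros H1 H2 x Hx.
  destruct (Req_dec (f1 x) (f2 x)) as [E|E]; auto; exfalso.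
  set (d := Rabs (f1 x - f2 x)).
  assert (Hd : 0 < d) by (apply Rabs_pos_lt; lra).
  destruct (H1 x Hx (d/4)) as [d1 [Hd1 P1]]; [lra|].
  destruct (H2 x Hx (d/4)) as [d2 [Hd2 P2]]; [lra|].
  set (h := Rmin (Rmin d1 d2) (1/2) / 2).
  assert (Hh : 0 < h /\ h < d1 /\ h < d2 /\ h <= 1/4).
  { unfold h, Rmin; repeat destruct Rle_dec; lra. }
  unfold I01 in Hx.
  set (y := if Rle_dec x (1/2) then x + h else x - h).
  assert (Hy : I01 y /\ Rabs (y - x) = h).
  { unfold y, I01; destruct Rle_dec.
    - replace (x + h - x) with h by ring. rewrite Rabs_pos_eq; lra.
    - replace (x - h - x) with (-h) by ring. rewrite Rabs_Ropp, Rabs_pos_eq; lra. }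
  destruct Hy as [Hy Hyx].
  specialize (P1 y Hy ltac:(lra)). specialize (P2 y Hy ltac:(lra)).
  rewrite Hyx in P1, P2.
  assert (Rabs ((f1 x - f2 x) * (y - x)) <= d/2 * h).
  { replace ((f1 x - f2 x) * (y - x)) with
      (- (f y - f x - f1 x * (y - x)) + (f y - f x - f2 x * (y - x))) by ring.
    eapply Rle_trans; [apply Rabs_triang|]. rewrite Rabs_Ropp. lra. }
  rewrite Rabs_mult, Hyx in H. fold d in H. nra.
Qed.

Lemma deriv_ext f g f' : (forall x, f x = g x) -> is_deriv01 f f' -> is_deriv01 g f'.
Proof. intros E H x Hx e He. destruct (H x Hx e He) as [d [Hd P]].
  exists d; split; auto. intros y Hy Hyx. rewrite <- !E. auto. Qed.

Lemma deriv_sub f g f' g' : is_deriv01 f f' -> is_deriv01 g g' ->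
  is_deriv01 (fun x => f x - g x) (fun x => f' x - g' x).
Proof.
  intros H1 H2 x Hx e He.
  destruct (H1 x Hx (e/2)) as [d1 [Hd1 P1]]; [lra|].
  destruct (H2 x Hx (e/2)) as [d2 [Hd2 P2]]; [lra|].
  exists (Rmin d1 d2); split; [apply Rmin_pos; auto|].
  intros y Hy Hyx.
  specialize (P1 y Hy ltac:(eapply Rlt_le_trans; [apply Hyx| apply Rmin_l])).
  specialize (P2 y Hy ltac:(eapply Rlt_le_trans; [apply Hyx| apply Rmin_r])).
  replace (f y - g y - (f x - g x) - (f' x - g' x) * (y - x)) with
    ((f y - f x - f' x * (y - x)) - (g y - g x - g' x * (y - x))) by ring.
  eapply Rle_trans; [apply Rabs_triang|]. rewrite Rabs_Ropp. lra.
Qed.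

Lemma deriv_const c : is_deriv01 (fun _ => c) (fun _ => 0).
Proof. intros x Hx e He. exists 1; split; [lra|]. intros y _ _.
  replace (c - c - 0 * (y - x)) with 0 by ring. rewrite Rabs_R0.
  apply Rmult_le_pos; [lra| apply Rabs_pos]. Qed.

Lemma cont_const c : cont01 (fun _ => c).
Proof. intros x _ e He. exists 1; split; [lra|]. intros. replace (c - c) with 0 by ring.
  rewrite Rabs_R0; lra. Qed.

Definition ph (x : R) : R := x ^ 2 / 2.

Lemma I01_ph x : I01 x -> I01 (ph x).
Proof. unfold I01, ph; intros; nra. Qed.

Lemma ph_lip x y : I01 x -> I01 y -> Rabs (ph y - ph x) <= Rabs (y - x).
Proof. unfold I01, ph; intros Hx Hy.
  replace (y ^ 2 / 2 - x ^ 2 / 2) with ((y - x) * ((y + x)/2)) by field.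
  rewrite Rabs_mult. rewrite (Rabs_pos_eq ((y+x)/2)) by lra.
  pose proof (Rabs_pos (y - x)). nra. Qed.

Lemma deriv_comp_ph f f' : is_deriv01 f f' ->
  is_deriv01 (fun x => f (ph x)) (fun x => f' (ph x) * x).
Proof.
  intros H x Hx e He.
  destruct (H (ph x) (I01_ph x Hx) (e/2)) as [d1 [Hd1 P1]]; [lra|].
  set (A := Rabs (f' (ph x))).
  assert (HA : 0 <= A) by apply Rabs_pos.
  exists (Rmin d1 (e / (A + 1))); split.
  { apply Rmin_pos; auto. apply Rdiv_lt_0_compat; lra. }
  intros y Hy Hyx.
  assert (Hl := ph_lip x y Hx Hy).
  specialize (P1 (ph y) (I01_ph y Hy) ltac:(eapply Rle_lt_trans; [apply Hl|];
     eapply Rlt_le_trans; [apply Hyx| apply Rmin_l])).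
  assert (Hy2 : Rabs (y - x) < e / (A + 1)) by
    (eapply Rlt_le_trans; [apply Hyx| apply Rmin_r]).
  assert (Hy3 : A * Rabs (y - x) <= e).
  { apply Rlt_le. apply (Rmult_lt_compat_l (A+1)) in Hy2; [|lra].
    replace ((A + 1) * (e / (A + 1))) with e in Hy2 by (field; lra).
    pose proof (Rabs_pos (y - x)). nra. }
  replace (f (ph y) - f (ph x) - f' (ph x) * x * (y - x)) with
    ((f (ph y) - f (ph x) - f' (ph x) * (ph y - ph x)) + f' (ph x) * ((y - x) * (y - x) / 2))
    by (unfold ph; field).
  eapply Rle_trans; [apply Rabs_triang|].
  rewrite Rabs_mult. fold A.
  replace (Rabs ((y - x) * (y - x) / 2)) with (Rabs (y-x) * Rabs (y - x) / 2).
  2:{ unfold Rdiv. rewrite !Rabs_mult. rewrite (Rabs_pos_eq (/2)) by lra. ring. }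
  pose proof (Rabs_pos (y - x)). nra.
Qed.

Lemma cont_comp_ph g : cont01 g -> cont01 (fun x => g (ph x) * x).
Proof.
  intros H x Hx e He.
  destruct (H (ph x) (I01_ph x Hx) (e/2)) as [d1 [Hd1 P1]]; [lra|].
  set (A := Rabs (g (ph x))).
  assert (HA : 0 <= A) by apply Rabs_pos.
  exists (Rmin d1 (e / (2 * (A + 1)))); split.
  { apply Rmin_pos; auto. apply Rdiv_lt_0_compat; lra. }
  intros y Hy Hyx.
  assert (Hl := ph_lip x y Hx Hy).
  specialize (P1 (ph y) (I01_ph y Hy) ltac:(eapply Rle_lt_trans; [apply Hl|];
     eapply Rlt_le_trans; [apply Hyx| apply Rmin_l])).
  assert (Hy2 : Rabs (y - x) < e / (2 * (A + 1))) by
    (eapply Rlt_le_trans; [apply Hyx| apply Rmin_r]).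
  assert (Hy3 : A * Rabs (y - x) < e / 2).
  { apply (Rmult_lt_compat_l (2 * (A+1))) in Hy2; [|lra].
    replace (2 * (A + 1) * (e / (2 * (A + 1)))) with e in Hy2 by (field; lra).
    pose proof (Rabs_pos (y - x)). nra. }
  replace (g (ph y) * y - g (ph x) * x) with
    ((g (ph y) - g (ph x)) * y + g (ph x) * (y - x)) by ring.
  eapply Rle_lt_trans; [apply Rabs_triang|].
  rewrite !Rabs_mult. fold A.
  unfold I01 in Hy. rewrite (Rabs_pos_eq y) by lra.
  pose proof (Rabs_pos (g (ph y) - g (ph x))). nra.
Qed.

Lemma pow_lt_base x y n : 0 <= x < y -> (0 < n)%nat -> x ^ n < y ^ n.
Proof. intros H Hn. induction n; [lia|]. destruct n; simpl; [lra|].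
  assert (x ^ S n < y ^ S n) by (apply IHn; lia).
  assert (0 <= x ^ S n) by (apply pow_le; lra). simpl in *. nra. Qed.

Lemma pow_le1' x n : 0 <= x <= 1 -> x ^ n <= 1.
Proof. intros H. rewrite <- (pow1 n). apply pow_incr. lra. Qed.

Definition T : Op := comp_op ph.

Fixpoint P (n : nat) (x : R) : R := match n with O => x | S m => P m (ph x) end.
Fixpoint Q (n : nat) (x : R) : R := match n with O => 1 | S m => Q m (ph x) * x end.

Lemma iterT n f x : op_pow T n f x = f (P n x).
Proof. revert x. induction n; intros x; simpl; auto.
  unfold T, comp_op at 1. change (op_pow T n f (ph x) = f (P n (ph x))). auto. Qed.

Lemma deriv_iter n f f' : is_deriv01 f f' ->
  is_deriv01 (op_pow T n f) (fun x => f' (P n x) * Q n x).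
Proof.
  intros H. induction n.
  - intros x Hx e He. destruct (H x Hx e He) as [d [Hd Pd]]. exists d; split; auto.
    intros y Hy Hyx. simpl. rewrite !Rmult_1_r. auto.
  - apply deriv_comp_ph in IHn.
    intros x Hx e He. destruct (IHn x Hx e He) as [d [Hd Pd]]. exists d; split; auto.
    intros y Hy Hyx. specialize (Pd y Hy Hyx). simpl. rewrite <- Rmult_assoc. exact Pd.
Qed.

Lemma P_I01 n x : I01 x -> I01 (P n x).
Proof. revert x; induction n; intros x Hx; simpl; auto. apply IHn, I01_ph, Hx. Qed.

Lemma P_mono n x y : I01 x -> I01 y -> x <= y -> P n x <= P n y.
Proof. revert x y; induction n; intros x y Hx Hy Hxy; simpl; auto.
  apply IHn; try apply I01_ph; auto. unfold ph, I01 in *. nra. Qed.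

Lemma P_smono n x y : I01 x -> I01 y -> x < y -> P n x < P n y.
Proof. revert x y; induction n; intros x y Hx Hy Hxy; simpl; auto.
  apply IHn; try apply I01_ph; auto. unfold ph, I01 in *. nra. Qed.

Lemma Q_mono n x y : I01 x -> I01 y -> x <= y -> 0 <= Q n x <= Q n y.
Proof. revert x y; induction n; intros x y Hx Hy Hxy; simpl; [lra|].
  assert (ph x <= ph y) by (unfold ph, I01 in *; nra).
  destruct (IHn (ph x) (ph y) (I01_ph x Hx) (I01_ph y Hy) H).
  unfold I01 in *. split; nra. Qed.

Lemma QP n x : Q n x * x = 2 ^ n * P n x.
Proof. revert x; induction n; intros x; [simpl; ring|]. cbn [Q P].
  replace (2 ^ S n * P n (ph x)) with (2 * (2^n * P n (ph x))) by (simpl; ring).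
  rewrite <- IHn. unfold ph. field. Qed.

Lemma P_closed n x : P n x = 2 * (x / 2) ^ (2 ^ n).
Proof. revert x; induction n; intros x; simpl; [field|].
  rewrite IHn. unfold ph. rewrite Nat.add_0_r, pow_add.
  replace (x ^ 2 / 2 / 2) with ((x/2)^2) by field.
  rewrite <- pow_mult. rewrite <- pow_add. f_equal. f_equal. lia. Qed.

Lemma P0 n : P n 0 = 0.
Proof. induction n; simpl; auto. unfold ph. replace (0 ^ 2 / 2) with 0 by field. auto. Qed.

Lemma nat_big m : exists N, forall n, (N <= n)%nat -> (m * n + n + 2 <= 2 ^ n)%nat.
Proof.
  assert (Hsq : forall n, (4 <= n)%nat -> (n * n <= 2 ^ n)%nat).
  { intros n Hn. induction Hn; simpl; [lia|]. nia. }
  exists (m + 4)%nat. intros n Hn. specialize (Hsq n ltac:(lia)). nia.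
Qed.

Lemma PQ_small eps : 0 < eps -> exists N, forall n, (N <= n)%nat ->
  P n 1 + Q n 1 < eps ^ n.
Proof.
  intros He.
  destruct (pow_lt_1_zero (1/2) ltac:(rewrite Rabs_pos_eq; lra) eps He) as [m Hm].
  specialize (Hm m (le_n m)). rewrite Rabs_pos_eq in Hm by (apply pow_le; lra).
  destruct (nat_big m) as [N HN].
  exists (S N). intros n Hn. specialize (HN n ltac:(lia)).
  assert (HQ : Q n 1 = 2 ^ n * P n 1) by (pose proof (QP n 1) as Hq; rewrite Rmult_1_r in Hq; exact Hq).
  rewrite HQ, P_closed.
  destruct (Nat.le_exists_sub _ _ HN) as [k [Hk _]]. rewrite Hk.
  replace (1/2) with (/2) by field.
  rewrite !pow_add.
  rewrite pow_mult.
  assert (H2 : 2 ^ n * (/2) ^ n = 1) by (rewrite <- Rpow_mult_distr; rewrite Rinv_r by lra; apply pow1).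
  assert (Hp : 0 < (/2) ^ n) by (apply pow_lt; lra).
  assert (Hk' : 0 < (/2) ^ k <= 1) by (split; [apply pow_lt; lra| apply pow_le1'; lra]).
  assert (Hm' : ((/2)^m)^n < eps ^ n).
  { apply pow_lt_base; [|lia]. split; [apply pow_le; lra|].
    replace (/2) with (1/2) by field. auto. }
  assert (Hmn : 0 < ((/2)^m)^n) by (apply pow_lt, pow_lt; lra).
  match goal with |- ?L < _ => assert (E : L = (/2)^k * ((/2)^m)^n * ((/2)^n + 2^n * (/2)^n) / 2) by (simpl; field) end.
  rewrite E, H2.
  assert (Hc : (/2)^n <= 1) by (apply pow_le1'; lra).
  assert (Hb : (/2)^k * ((/2)^m)^n <= ((/2)^m)^n) by nra.
  nra.
Qed.

Definition clamp (x : R) : R := Rmax 0 (Rmin 1 x).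

Lemma clamp_I01 x : I01 (clamp x).
Proof. unfold clamp, I01, Rmax, Rmin; repeat destruct Rle_dec; lra. Qed.

Lemma clamp_id x : I01 x -> clamp x = x.
Proof. unfold clamp, I01, Rmax, Rmin; repeat destruct Rle_dec; lra. Qed.

Lemma clamp_lip x y : Rabs (clamp y - clamp x) <= Rabs (y - x).
Proof. unfold clamp, Rmax, Rmin; repeat destruct Rle_dec; unfold Rabs;
  repeat destruct Rcase_abs; lra. Qed.

Lemma lip01 f f' M : is_deriv01 f f' -> (forall z, I01 z -> Rabs (f' z) <= M) ->
  forall x y, I01 x -> I01 y -> Rabs (f y - f x) <= M * Rabs (y - x).
Proof.
  intros H HM x y Hx Hy.
  set (fc := fun z => f (clamp z)).
  assert (Hcont : forall z, continuity_pt fc z).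
  { intros z. unfold continuity_pt, continue_in, limit1_in, limit_in. simpl. unfold R_dist.
    intros e He.
    set (c := clamp z).
    destruct (H c (clamp_I01 z) 1 ltac:(lra)) as [d [Hd Pd]].
    set (A := Rabs (f' c)).
    assert (HA : 0 <= A) by apply Rabs_pos.
    exists (Rmin d (e / (A + 2))); split.
    { apply Rmin_pos; auto. apply Rdiv_lt_0_compat; lra. }
    intros w [_ Hw].
    assert (Hl := clamp_lip z w).
    assert (Hw1 : Rabs (clamp w - c) < d).
    { eapply Rle_lt_trans; [apply Hl|]. eapply Rlt_le_trans; [apply Hw|apply Rmin_l]. }
    assert (Hw2 : Rabs (clamp w - c) < e / (A + 2)).
    { eapply Rle_lt_trans; [apply Hl|]. eapply Rlt_le_trans; [apply Hw|apply Rmin_r]. }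
    specialize (Pd (clamp w) (clamp_I01 w) Hw1).
    unfold fc. fold c.
    assert (Hw3 : (A + 2) * Rabs (clamp w - c) < e).
    { apply (Rmult_lt_compat_l (A+2)) in Hw2; [|lra].
      replace ((A + 2) * (e / (A + 2))) with e in Hw2 by (field; lra). lra. }
    replace (f (clamp w) - f c) with ((f (clamp w) - f c - f' c * (clamp w - c)) + f' c * (clamp w - c)) by ring.
    eapply Rle_lt_trans; [apply Rabs_triang|]. rewrite Rabs_mult. fold A.
    pose proof (Rabs_pos (clamp w - c)). nra. }
  assert (Hder : forall z, 0 < z < 1 -> is_derive fc z (f' z)).
  { intros z Hz. apply is_derive_Reals. intros e He.
    assert (Hz' : I01 z) by (unfold I01; lra).
    destruct (H z Hz' (e/2) ltac:(lra)) as [d [Hd Pd]].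
    assert (Hpos : 0 < Rmin d (Rmin z (1 - z))) by (repeat apply Rmin_pos; lra).
    exists (mkposreal _ Hpos). intros h Hh0 Hh. simpl in Hh.
    assert (Hh1 : Rabs h < d) by (eapply Rlt_le_trans; [apply Hh| apply Rmin_l]).
    assert (Hh2 : Rabs h < Rmin z (1 - z)) by (eapply Rlt_le_trans; [apply Hh| apply Rmin_r]).
    assert (Hzh : I01 (z + h)).
    { unfold I01. revert Hh2. unfold Rmin, Rabs; destruct Rle_dec; destruct Rcase_abs; lra. }
    unfold fc. rewrite !clamp_id by auto.
    specialize (Pd (z + h) Hzh ltac:(replace (z + h - z) with h by ring; auto)).
    replace (z + h - z) with h in Pd by ring.
    replace ((f (z + h) - f z) / h - f' z) with ((f (z + h) - f z - f' z * h) / h) by (field; auto).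
    unfold Rdiv. rewrite Rabs_mult, Rabs_inv.
    assert (0 < Rabs h) by (apply Rabs_pos_lt; auto).
    apply (Rmult_le_compat_r (/ Rabs h)) in Pd; [|left; apply Rinv_0_lt_compat; auto].
    replace (e / 2 * Rabs h * / Rabs h) with (e/2) in Pd by (field; lra). lra. }
  destruct (MVT_gen fc x y f') as [c [Hc Ec]].
  { intros z Hz. apply Hder. unfold I01 in *. revert Hz. unfold Rmin, Rmax; repeat destruct Rle_dec; lra. }
  { intros z _. apply Hcont. }
  unfold fc in Ec. rewrite !clamp_id in Ec by auto.
  rewrite Ec, Rabs_mult. apply Rmult_le_compat_r; [apply Rabs_pos|]. apply HM.
  unfold I01 in *. revert Hc. unfold Rmin, Rmax; repeat destruct Rle_dec; lra.
Qed.

Lemma BW_sub (u : nat -> R) : (forall n, -1 <= u n <= 1) ->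
  exists (phi : nat -> nat) l, (forall n, (phi n < phi (S n))%nat) /\
    forall eps, 0 < eps -> exists N, forall n, (N <= n)%nat -> Rabs (u (phi n) - l) <= eps.
Proof.
  intros Hu.
  destruct (Bolzano_Weierstrass u (fun c => -1 <= c <= 1) (compact_P3 (-1) 1) Hu) as [l Hl].
  assert (Hex : forall N k : nat, exists p, (N <= p)%nat /\ Rabs (u p - l) < / (INR k + 1)).
  { intros N k.
    assert (Hk : 0 < / (INR k + 1)) by (apply Rinv_0_lt_compat; pose proof (pos_INR k); lra).
    destruct (Hl (fun y => Rabs (y - l) < / (INR k + 1)) N) as [p Hp].
    - exists (mkposreal _ Hk). intros y Hy. exact Hy.
    - exists p; exact Hp. }
  assert (Hf : exists f : nat -> nat -> nat, forall N k, (N <= f N k)%nat /\ Rabs (u (f N k) - l) < / (INR k + 1)).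
  { exists (fun N k => proj1_sig (constructive_indefinite_description _ (Hex N k))).
    intros N k. exact (proj2_sig (constructive_indefinite_description _ (Hex N k))). }
  destruct Hf as [f Hf].
  set (phi := fix g (n : nat) : nat := match n with O => f O O | S m => f (S (g m)) (S m) end).
  exists phi, l. split.
  - intros n. simpl. apply (Hf (S (phi n)) (S n)).
  - assert (Hb : forall n, Rabs (u (phi n) - l) < / (INR n + 1)).
    { intros [|n]; simpl; [apply (Hf 0%nat 0%nat)| apply Hf]. }
    intros eps He.
    destruct (INR_archimed eps 1 He) as [N HN].
    exists N. intros n Hn. specialize (Hb n). apply Rlt_le. eapply Rlt_le_trans; [apply Hb|].
    apply le_INR in Hn.
    assert (0 < INR n + 1) by (pose proof (pos_INR n); lra).
    apply (Rmult_le_reg_l (INR n + 1)); auto. rewrite Rinv_r by lra. nra.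
Qed.

Lemma deriv_of_Reals f f' : (forall x, derivable_pt_lim f x (f' x)) -> is_deriv01 f f'.
Proof.
  intros H x _ e He. destruct (H x e He) as [d Hd]. exists d; split; [apply cond_pos|].
  intros y _ Hyx. destruct (Req_dec y x) as [E|E].
  { subst. replace (f x - f x - f' x * (x - x)) with 0 by ring. rewrite Rabs_R0.
    apply Rmult_le_pos; [lra|apply Rabs_pos]. }
  specialize (Hd (y - x) ltac:(lra) Hyx). replace (x + (y - x)) with y in Hd by ring.
  assert (0 < Rabs (y - x)) by (apply Rabs_pos_lt; lra).
  replace (f y - f x - f' x * (y - x)) with (((f y - f x) / (y - x) - f' x) * (y - x)) by (field; lra).
  rewrite Rabs_mult. nra.
Qed.

Lemma cont_of_Reals g : (forall x, continuity_pt g x) -> cont01 g.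
Proof.
  intros H x _ e He. specialize (H x).
  unfold continuity_pt, continue_in, limit1_in, limit_in in H. simpl in H. unfold R_dist in H.
  destruct (H e He) as [d [Hd Pd]]. exists d; split; auto.
  intros y _ Hyx. destruct (Req_dec y x) as [E|E].
  { subst. replace (g x - g x) with 0 by ring. rewrite Rabs_R0; lra. }
  apply Pd. split; auto. split; [exact I| auto].
Qed.

Lemma T_bounded : bounded_op T.
Proof.
  split; [split; [|split]|].
  - intros f [f' [Hd Hc]]. exists (fun x => f' (ph x) * x). split.
    + apply deriv_comp_ph; auto.
    + apply cont_comp_ph; auto.
  - intros f g _ _ E x Hx. unfold T, comp_op. apply E, I01_ph, Hx.
  - intros f g a _ _ x Hx. reflexivity.
  - exists 1. split; [lra|]. intros f r _ [f' [Hd Hb]].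
    exists (fun x => f' (ph x) * x). split; [apply deriv_comp_ph; auto|].
    intros x y Hx Hy. unfold T, comp_op.
    specialize (Hb (ph x) (ph y) (I01_ph x Hx) (I01_ph y Hy)).
    rewrite Rabs_mult. unfold I01 in Hy. rewrite (Rabs_pos_eq y) by lra.
    pose proof (Rabs_pos (f' (ph y))). nra.
Qed.

Lemma T_unital : unital_endo T.
Proof. split; [apply T_bounded|]. split; intros; intros x Hx; reflexivity. Qed.

Definition K0 : Op := fun f _ => f 0.

Lemma I01_0 : I01 0.
Proof. unfold I01; lra. Qed.

Lemma K0_compact : compact_op K0.
Proof.
  split; [split; [split; [|split]|]|].
  - intros f _. exists (fun _ => 0). split; [apply deriv_const|apply cont_const].
  - intros f g _ _ E x _. unfold K0. apply E, I01_0.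
  - intros f g a _ _ x _. reflexivity.
  - exists 1. split; [lra|]. intros f r _ [f' [Hd Hb]].
    exists (fun _ => 0). split; [apply deriv_const|].
    intros x y _ _. unfold K0. specialize (Hb 0 0 I01_0 I01_0).
    rewrite Rabs_R0. pose proof (Rabs_pos (f' 0)). lra.
  - intros u Hu.
    assert (Hb : forall n, -1 <= u n 0 <= 1).
    { intros n. destruct (Hu n) as [_ [f' [_ Hb]]]. specialize (Hb 0 0 I01_0 I01_0).
      pose proof (Rabs_pos (f' 0)). assert (Rabs (u n 0) <= 1) by lra.
      revert H0. unfold Rabs; destruct Rcase_abs; lra. }
    destruct (BW_sub (fun n => u n 0) Hb) as [phi [l [Hphi Hl]]].
    exists phi, (fun _ => l). split; [auto|]. split.
    + exists (fun _ => 0). split; [apply deriv_const|apply cont_const].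
    + intros eps He. destruct (Hl eps He) as [N HN]. exists N. intros n Hn.
      exists (fun _ => 0). split.
      { apply (deriv_ext (fun _ => u (phi n) 0 - l)); [intros; reflexivity| apply deriv_const]. }
      intros x y _ _. unfold K0. rewrite Rabs_R0, Rplus_0_r. apply HN, Hn.
Qed.

Lemma T_riesz : riesz_op T.
Proof.
  split; [apply T_bounded|].
  intros eps He. destruct (PQ_small eps He) as [N HN]. exists N. intros n Hn.
  exists K0, (P n 1 + Q n 1). split; [apply K0_compact|]. split; [apply HN, Hn|].
  assert (I1 : I01 1) by (unfold I01; lra).
  assert (HP1 : 0 <= P n 1) by (pose proof (P_I01 n 1 I1); unfold I01 in *; lra).
  assert (HQ1 : 0 <= Q n 1) by (apply (Q_mono n 1 1 I1 I1); lra).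
  split; [lra|].
  intros f r _ [f' [Hd Hb]].
  exists (fun x => f' (P n x) * Q n x - 0). split.
  { apply deriv_sub; [apply deriv_iter; auto| apply deriv_const]. }
  assert (Hr : forall z, I01 z -> Rabs (f' z) <= r).
  { intros z Hz. specialize (Hb 0 z I01_0 Hz). pose proof (Rabs_pos (f 0)). lra. }
  assert (Hr0 : 0 <= r) by (specialize (Hr 0 I01_0); pose proof (Rabs_pos (f' 0)); lra).
  intros x y Hx Hy. unfold op_sub, K0. rewrite iterT, Rminus_0_r.
  assert (H1 : Rabs (f (P n x) - f 0) <= r * P n 1).
  { pose proof (lip01 f f' r Hd Hr 0 (P n x) I01_0 (P_I01 n x Hx)) as L.
    rewrite Rminus_0_r in L. pose proof (P_I01 n x Hx) as Hpx. unfold I01 in Hpx.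
    rewrite (Rabs_pos_eq (P n x)) in L by lra.
    pose proof (P_mono n x 1 Hx I1 ltac:(unfold I01 in Hx; lra)). nra. }
  assert (H2 : Rabs (f' (P n y) * Q n y) <= r * Q n 1).
  { rewrite Rabs_mult. destruct (Q_mono n y 1 Hy I1 ltac:(unfold I01 in Hy; lra)) as [Q0 Q1].
    rewrite (Rabs_pos_eq (Q n y)) by lra.
    pose proof (Hr _ (P_I01 n y Hy)). pose proof (Rabs_pos (f' (P n y))). nra. }
  nra.
Qed.

Definition uk (a : R) (k : nat) (y : R) : R := (y - a) / (2 * (1 + INR k ^ 2 * (y - a) ^ 2)).
Definition duk (a : R) (k : nat) (y : R) : R :=
  (1 - INR k ^ 2 * (y - a) ^ 2) / (2 * (1 + INR k ^ 2 * (y - a) ^ 2) ^ 2).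

Lemma den_pos (a : R) k y : 0 < 1 + INR k ^ 2 * (y - a) ^ 2.
Proof. pose proof (pow2_ge_0 (INR k)). pose proof (pow2_ge_0 (y - a)). nra. Qed.

Lemma uk_deriv a k y : derivable_pt_lim (uk a k) y (duk a k y).
Proof.
  apply is_derive_Reals. unfold uk, duk. pose proof (den_pos a k y).
  auto_derive.
  - lra.
  - field. lra.
Qed.

Lemma duk_cont a k y : continuity_pt (duk a k) y.
Proof.
  apply continuity_pt_filterlim. apply (ex_derive_continuous (V:=R_NormedModule)).
  unfold duk. pose proof (den_pos a k y). auto_derive. nra.
Qed.

Lemma abs_div_le p q c : 0 < q -> Rabs p <= c * q -> Rabs (p / q) <= c.
Proof. intros Hq H. unfold Rdiv. rewrite Rabs_mult, Rabs_inv, (Rabs_pos_eq q) by lra.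
  apply (Rmult_le_reg_r q); auto. rewrite Rmult_assoc, Rinv_l by lra. lra. Qed.

Lemma uk_ball a k : 0 <= a <= 1 -> C1 (uk a k) /\ C1norm_le (uk a k) 1.
Proof.
  intros Ha. split.
  - exists (duk a k). split; [apply deriv_of_Reals; intros; apply uk_deriv|].
    apply cont_of_Reals; intros; apply duk_cont.
  - exists (duk a k). split; [apply deriv_of_Reals; intros; apply uk_deriv|].
    intros x y Hx Hy.
    assert (H1 : Rabs (uk a k x) <= 1/2).
    { unfold uk. pose proof (den_pos a k x). apply abs_div_le; [lra|].
      assert (Rabs (x - a) <= 1) by (unfold I01 in Hx; unfold Rabs; destruct Rcase_abs; lra).
      pose proof (pow2_ge_0 (INR k)). pose proof (pow2_ge_0 (x - a)). nra. }
    assert (H2 : Rabs (duk a k y) <= 1/2).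
    { unfold duk. pose proof (den_pos a k y). apply abs_div_le; [nra|].
      set (s := INR k ^ 2 * (y - a) ^ 2) in *.
      assert (0 <= s) by (unfold s; pose proof (pow2_ge_0 (INR k)); pose proof (pow2_ge_0 (y - a)); nra).
      assert (Rabs (1 - s) <= 1 + s) by (unfold Rabs; destruct Rcase_abs; lra).
      nra. }
    lra.
Qed.

Lemma duk_small a k y : Rabs (duk a k y) <= / (2 * (1 + INR k ^ 2 * (y - a) ^ 2)).
Proof.
  unfold duk. pose proof (den_pos a k y). set (s := INR k ^ 2 * (y - a) ^ 2) in *.
  apply abs_div_le; [nra|].
  assert (0 <= s) by (unfold s; pose proof (pow2_ge_0 (INR k)); pose proof (pow2_ge_0 (y - a)); nra).
  assert (Rabs (1 - s) <= 1 + s) by (unfold Rabs; destruct Rcase_abs; lra).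
  replace (/ (2 * (1 + s)) * (2 * (1 + s) ^ 2)) with (1 + s) by (field; lra). lra.
Qed.

Lemma phi_ge (phi : nat -> nat) : (forall n, (phi n < phi (S n))%nat) -> forall n, (n <= phi n)%nat.
Proof. intros H n. induction n; [lia|]. specialize (H n). lia. Qed.

Lemma T_not_pc : ~ power_compact T.
Proof.
  intros [N [_ [_ Hc]]].
  assert (I1 : I01 1) by (unfold I01; lra).
  set (a := P N 1).
  assert (Ha : 0 < a <= 1).
  { split. - unfold a. rewrite P_closed. apply Rmult_lt_0_compat; [lra|apply pow_lt; lra].
    - pose proof (P_I01 N 1 I1). unfold a; unfold I01 in *. lra. }
  destruct (Hc (uk a) (fun k => uk_ball a k ltac:(lra))) as [phi [g [Hphi [[g' [Hg Hgc]] Hconv]]]].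
  set (D := fun k x => duk a k (P N x) * Q N x).
  assert (HD : forall k, is_deriv01 (op_pow T N (uk a k)) (D k)).
  { intros k. apply deriv_iter. apply deriv_of_Reals. intros; apply uk_deriv. }
  assert (HQ1 : 0 < Q N 1).
  { pose proof (QP N 1) as E. rewrite Rmult_1_r in E. rewrite E.
    apply Rmult_lt_0_compat; [apply pow_lt; lra| apply Ha]. }
  set (d := Q N 1 / 2).
  assert (Hd : 0 < d) by (unfold d; lra).
  assert (HD1 : forall k, D k 1 = d).
  { intros k. unfold D, d, duk. fold a. replace (a - a) with 0 by ring. field. }
  set (e := d / 8).
  assert (He : 0 < e) by (unfold e; lra).
  destruct (Hconv e He) as [N0 HN0].
  assert (Hclose : forall n, (N0 <= n)%nat -> forall y, I01 y -> Rabs (D (phi n) y - g' y) <= e).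
  { intros n Hn y Hy. destruct (HN0 n Hn) as [h [Hh Hb]].
    assert (Eh : h y = D (phi n) y - g' y).
    { apply (deriv_unique _ _ _ Hh (deriv_sub _ _ _ _ (HD (phi n)) Hg) y Hy). }
    specialize (Hb y y Hy Hy). rewrite <- Eh. pose proof (Rabs_pos (op_pow T N (uk a (phi n)) y - g y)). lra. }
  assert (Hg1 : d - e <= g' 1).
  { specialize (Hclose N0 (le_n _) 1 I1). rewrite HD1 in Hclose.
    revert Hclose. unfold Rabs; destruct Rcase_abs; lra. }
  destruct (Hgc 1 I1 e He) as [del [Hdel Pdel]].
  set (y0 := Rmax 0 (1 - del / 2)).
  assert (Hy0 : I01 y0 /\ y0 < 1 /\ Rabs (y0 - 1) < del).
  { unfold y0, Rmax, I01. destruct Rle_dec; unfold Rabs; destruct Rcase_abs; lra. }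
  destruct Hy0 as [Hy0 [Hy0' Hy0'']].
  specialize (Pdel y0 Hy0 Hy0'').
  assert (Hgy0 : d - 2 * e < g' y0) by (revert Pdel; unfold Rabs; destruct Rcase_abs; lra).
  set (t := P N y0 - a).
  assert (Ht : 0 < t ^ 2).
  { assert (P N y0 < a) by (unfold a; apply P_smono; auto).
    unfold t. simpl. nra. }
  set (q := Rabs (Q N y0)).
  assert (Hq : 0 <= q) by apply Rabs_pos.
  destruct (INR_archimed (2 * e * t ^ 2) q ltac:(nra)) as [m Hm].
  set (n := (N0 + m + 1)%nat).
  assert (Hkn : (n <= phi n)%nat) by (apply phi_ge; auto).
  set (k := INR (phi n)).
  assert (Hk1 : 1 <= k) by (unfold k; apply (le_INR 1); unfold n in *; lia).
  assert (Hkm : INR m <= k) by (unfold k; apply le_INR; unfold n in *; lia).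
  assert (Hs : k * t ^ 2 <= k ^ 2 * t ^ 2) by (simpl; nra).
  assert (Hsm1 : INR m * (2 * e * t ^ 2) <= k * (2 * e * t ^ 2)) by (apply Rmult_le_compat_r; nra).
  assert (Hsm2 : 2 * e * (k * t ^ 2) <= 2 * e * (k ^ 2 * t ^ 2)) by (apply Rmult_le_compat_l; lra).
  assert (Hsm : q < 2 * e * (1 + k ^ 2 * t ^ 2)) by lra.
  assert (HDy0 : Rabs (D (phi n) y0) <= e).
  { unfold D. rewrite Rabs_mult. fold q.
    pose proof (duk_small a (phi n) (P N y0)) as Hs2. fold t k in Hs2.
    assert (0 < 1 + k ^ 2 * t ^ 2) by (pose proof (pow2_ge_0 k); nra).
    assert (Hinv : / (2 * (1 + k ^ 2 * t ^ 2)) * q <= e).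
    { apply (Rmult_le_reg_l (2 * (1 + k ^ 2 * t ^ 2))); [lra|].
      rewrite <- Rmult_assoc, Rinv_r by lra. lra. }
    pose proof (Rabs_pos (duk a (phi n) (P N y0))). nra. }
  specialize (Hclose n ltac:(unfold n; lia) y0 Hy0).
  assert (Hgy0' : g' y0 <= 2 * e).
  { revert Hclose HDy0. unfold Rabs; repeat destruct Rcase_abs; lra. }
  unfold e in *. lra.
Qed.

Theorem corollary3p2 :
  (exists T : Op, unital_endo T /\ riesz_op T /\ ~ power_compact T) /\
  (let T := comp_op (fun x => x ^ 2 / 2) in
   unital_endo T /\ riesz_op T /\ ~ power_compact T).
Proof.
  split.
  - exists T. exact (conj T_unital (conj T_riesz T_not_pc)).
  - exact (conj T_unital (conj T_riesz T_not_pc)).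
Qed.
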